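(* Let $\beta\ge0.8218$ be a real number, and let $Z>0$ and $N>0$ be real numbers with $N/Z<7/3$. Then $$\beta^{-1}Z+3Z^{1/3}>\min\left\{N,\ Z\,\frac{1+0.68\,N^{-2/3}}{\beta-3(\beta/6)^{1/3}N^{-2/3}}\right\}.$$ *)

(* Defs.v *)
From Stdlib Require Import Reals.

(* Main.v *)
Require Import Defs.
From Stdlib Require Import Reals Lra Psatz.
Open Scope R_scope.

Lemma key0 c s : 0.5154 <= c -> 0 < s -> 6*s^3 > 1 -> 3*s^3 < 7*c^3 ->
  18*c^3*s^2 - 3*s^3 > 0.68*c^2.
Proof.
  intros Hc Hs H1 H2.
  assert (Hs1 : 0.5503 < s).
  { destruct (Rlt_le_dec 0.5503 s) as [h|h]; auto.
    assert (s^3 <= 0.5503^3).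
    { apply pow_incr; lra. } lra. }
  assert (Hs2 : s < 1.3264 * c).
  { destruct (Rlt_le_dec s (1.3264*c)) as [h|h]; auto.
    assert ((1.3264*c)^3 <= s^3). { apply pow_incr; nra. } nra. }
  assert (Hc3 : 0.5154^3 <= c^3) by (apply pow_incr; lra).
  destruct (Rle_lt_dec s (4*c^3)) as [h|h].
  - assert (E: 18*c^3*s^2 - 3*s^3 - (18*c^3*0.5503^2 - 3*0.5503^3) =
       (s - 0.5503)*(18*c^3*(s+0.5503) - 3*(s^2+s*0.5503+0.5503^2))) by ring.
    assert (F: 18*c^3*(s+0.5503) - 3*(s^2+s*0.5503+0.5503^2) >= 0) by nra.
    assert (G: 18*c^3*0.5503^2 - 3*0.5503^3 > 0.68*c^2) by nra.
    nra.
  - set (k := 1.3264*c) in *.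
    assert (E: 18*c^3*s^2 - 3*s^3 - (18*c^3*k^2 - 3*k^3) =
       (s - k)*(18*c^3*(s+k) - 3*(s^2+s*k+k^2))) by ring.
    assert (F: 18*c^3*(s+k) - 3*(s^2+s*k+k^2) <= 0) by nra.
    assert (G: 18*c^3*k^2 - 3*k^3 > 0.68*c^2).
    { unfold k. clear - Hc.
      set (a:=18*1.3264^2). set (b := 3*1.3264^3).
      assert (E: 18*c^3*(1.3264*c)^2 - 3*(1.3264*c)^3 - 0.68*c^2 = c^2*(a*c^3 - b*c - 0.68)) by (unfold a,b; ring).
      assert (P: a*c^3 - b*c - 0.68 - (a*0.5154^3 - b*0.5154 - 0.68) = (c-0.5154)*(a*(c^2+c*0.5154+0.5154^2) - b)) by ring.
      assert (Q: a*(c^2+c*0.5154+0.5154^2) - b >= 0) by (unfold a,b; nra).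
      assert (V: a*0.5154^3 - b*0.5154 - 0.68 > 0) by (unfold a,b; lra).
      assert (a*c^3 - b*c - 0.68 > 0) by nra.
      assert (c^2>0) by nra.
      nra. }
    nra.
Qed.

Lemma rp_pos x y : 0 < Rpower x y.
Proof. unfold Rpower. apply exp_pos. Qed.

Lemma rp_cube x : 0 < x -> (Rpower x (1/3))^3 = x.
Proof.
  intro Hx. rewrite <- (Rpower_pow 3) by apply rp_pos.
  rewrite Rpower_mult. replace (1/3 * INR 3) with 1 by (simpl; field).
  apply Rpower_1; auto.
Qed.

Lemma rp_m23 x : 0 < x -> Rpower x (-(2/3)) = / (Rpower x (1/3))^2.
Proof.
  intro Hx. rewrite Rpower_Ropp. f_equal.
  rewrite <- (Rpower_pow 2) by apply rp_pos.
  rewrite Rpower_mult. f_equal. simpl; field.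
Qed.

Theorem lemma5 (beta Z N : R)
  (hbeta : 0.8218 <= beta) (hZ : 0 < Z) (hN : 0 < N) (hNZ : N / Z < 7 / 3) :
  / beta * Z + 3 * Rpower Z (1 / 3) >
  Rmin N
    (Z * (1 + 0.68 * Rpower N (- (2 / 3)))
       / (beta - 3 * Rpower (beta / 6) (1 / 3) * Rpower N (- (2 / 3)))).
Proof.
  rewrite (rp_m23 N hN).
  assert (Hu3 := rp_cube Z hZ). assert (Hv3 := rp_cube N hN).
  assert (Hb6 : 0 < beta/6) by lra.
  assert (Hc3 := rp_cube (beta/6) Hb6).
  assert (Hu := rp_pos Z (1/3)). assert (Hv := rp_pos N (1/3)).
  assert (Hc := rp_pos (beta/6) (1/3)).
  set (u := Rpower Z (1/3)) in *. set (v := Rpower N (1/3)) in *.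
  set (c := Rpower (beta/6) (1/3)) in *.
  rewrite <- Hu3 in *. rewrite <- Hv3 in *. clear Hu3 Hv3.
  assert (Hbeta : beta = 6*c^3) by lra. clear Hc3.
  assert (Hc0 : 0.5154 <= c).
  { destruct (Rlt_le_dec c 0.5154) as [h|h]; auto.
    assert (c^3 <= 0.5154^3) by (apply pow_incr; lra). lra. }
  assert (H73 : 3*v^3 < 7*u^3).
  { assert (0 < u^3) by (apply pow_lt; auto).
    apply (Rmult_lt_compat_r (u^3)) in hNZ; auto.
    unfold Rdiv in hNZ. rewrite Rmult_assoc, Rinv_l in hNZ by lra. lra. }
  assert (Hb0 : 0 < beta) by lra.
  assert (Hv2 : 0 < v^2) by (apply pow_lt; auto).
  destruct (Rlt_le_dec (v^3) (/beta * u^3 + 3*u)) as [h | h].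
  - apply Rle_lt_trans with (v^3); [apply Rmin_l | lra].
  - eapply Rle_lt_trans; [apply Rmin_r|].
    set (D := beta - 3 * c * / v^2).
    destruct (Rle_lt_dec D 0) as [hD | hD].
    + assert (Hn : 0 < u^3 * (1 + 0.68 * / v^2)).
      { assert (0 < u^3) by (apply pow_lt; auto).
        assert (0 < / v^2) by (apply Rinv_0_lt_compat; auto). nra. }
      assert (u^3 * (1 + 0.68 * / v^2) / D <= 0).
      { destruct (Req_dec D 0) as [e|e].
        - unfold Rdiv; rewrite e, Rinv_0; lra.
        - assert (/ D < 0) by (apply Rinv_lt_0_compat; lra).
          unfold Rdiv; nra. }
      assert (0 < / beta * u^3) by (apply Rmult_lt_0_compat; [apply Rinv_0_lt_compat|apply pow_lt]; auto).
      unfold D in *. lra.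
    + unfold Rdiv. apply Rmult_lt_reg_r with D; auto.
      rewrite Rmult_assoc, Rinv_l, Rmult_1_r by lra.
      unfold D.
      set (r := v / u).
      assert (Hr : v = r * u) by (unfold r; field; lra).
      assert (Hr0 : 0 < r) by (unfold r; apply Rdiv_lt_0_compat; auto).
      rewrite Hr in *.
      set (w := / (r*u)^2).
      assert (Hw : w * (r*u)^2 = 1) by (unfold w; field; nra).
      set (ib := / beta) in *.
      assert (Hib : ib * beta = 1) by (unfold ib; field; lra).
      assert (K0 := key0 c (c*r) Hc0 ltac:(nra) ltac:(nra) ltac:(nra)).
      assert (K : 3*beta*r^2 - 3*c*r^3 > 0.68).
      { assert (c^2 > 0) by nra.
        assert (c^2 * (3*beta*r^2 - 3*c*r^3 - 0.68) > 0) by (rewrite Hbeta; nra).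
        nra. }
      assert (Hu3 : 0 < u^3) by (apply pow_lt; auto).
      assert (K3 : 3*beta*r^2*u^3 > 0.68*u^3 + 3*c*r^3*u^3) by nra.
      assert (h3 : 3*c*(r^3*u^3) >= 3*c*(ib*u^3 + 3*u)).
      { apply Rmult_ge_compat_l; [lra|]. replace ((r*u)^3) with (r^3*u^3) in h by ring. lra. }
      assert (M : 3*beta*r^2*u^3 > 3*c*u^3*ib + 9*c*u + 0.68*u^3) by nra.
      assert (E : (ib * u ^ 3 + 3 * u) * (beta - 3 * c * w) - u ^ 3 * (1 + 0.68 * w)
                  = w * (3*beta*r^2*u^3 - (3*c*u^3*ib + 9*c*u + 0.68*u^3))).
      { assert (E0 : (ib * u ^ 3 + 3 * u) * (beta - 3 * c * w) - u ^ 3 * (1 + 0.68 * w)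
                  - w * (3*beta*r^2*u^3 - (3*c*u^3*ib + 9*c*u + 0.68*u^3))
                  = u^3*(ib*beta-1) - 3*beta*u*(w*(r*u)^2-1)) by ring.
        rewrite Hib, Hw in E0. lra. }
      assert (0 < w) by (unfold w; apply Rinv_0_lt_compat; nra).
      nra.
Qed.
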